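(* If a generalised binary matrix $\mathbf{Y}$ is minimally non-firm, then $i(\mathbf{Y})=br(\mathbf{Y})-1$.
   Context: A generalised binary matrix is a matrix with entries in $\{0,1,?\}$. For such $\mathbf{Y}$, $\mathrm{supp}(\mathbf{Y})=\{(i,j):y_{i,j}=1\}$. A submatrix indexed by $I\times J$ is obtained by deleting rows not in $I$ and columns not in $J$; it is proper if it omits at least one row or column. A rectangle of $\mathbf{Y}$ is a set $I\times J$ of positions containing no entry equal to $0$. An isolated set is a subset of $\mathrm{supp}(\mathbf{Y})$ no two distinct elements of which lie in a common rectangle; $i(\mathbf{Y})$ is the maximum size of an isolated set. $br(\mathbf{Y})$ is the minimum number of rectangles whose union contains $\mathrm{supp}(\mathbf{Y})$ ($?$ entries need not be covered). $\mathbf{Y}$ is minimally non-firm if $i(\mathbf{Y})<br(\mathbf{Y})$ and $i(\mathbf{Y}')=br(\mathbf{Y}')$ for every proper submatrix $\mathbf{Y}'$ of $\mathbf{Y}$. *)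

(* Defs.v *)
From mathcomp Require Import all_boot all_order.
From mathcomp Require Import all_algebra.

Set Implicit Arguments.
Unset Strict Implicit.
Unset Printing Implicit Defensive.

(* Entries of a generalised binary matrix: 0, 1, or ? *)
Inductive gentry := G0 | G1 | GQ.

Definition is_zero (e : gentry) : bool := if e is G0 then true else false.
Definition is_one (e : gentry) : bool := if e is G1 then true else false.

Section GenMat.
Variables (R C : finType).
Implicit Type Y : R -> C -> gentry.

Definition gsupp Y : {set R * C} := [set p | is_one (Y p.1 p.2)].

Definition is_rect Y (I : {set R}) (J : {set C}) : bool :=
  [forall i in I, forall j in J, ~~ is_zero (Y i j)].

Definition common_rect Y (p q : R * C) : bool :=
  [exists I : {set R}, exists J : {set C},
     [&& is_rect Y I J, p.1 \in I, p.2 \in J, q.1 \in I & q.2 \in J]].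

Definition isolated Y (S : {set R * C}) : bool :=
  (S \subset gsupp Y) &&
  [forall p in S, forall q in S, (p != q) ==> ~~ common_rect Y p q].

Definition inum Y : nat := \max_(S : {set R * C} | isolated Y S) #|S|.

Definition rect_cover Y (P : {set {set R} * {set C}}) : bool :=
  [forall r in P, is_rect Y r.1 r.2] &&
  [forall p in gsupp Y, exists r in P, (p.1 \in r.1) && (p.2 \in r.2)].

Definition covers_with Y (k : nat) : bool :=
  [exists P : {set {set R} * {set C}}, (#|P| == k) && rect_cover Y P].

Lemma covers_with_ex Y : exists k, covers_with Y k.
Proof.
exists #|[set ([set p.1], [set p.2]) | p in gsupp Y]|.
apply/existsP; exists [set ([set p.1], [set p.2]) | p in gsupp Y].
rewrite eqxx /=; apply/andP; split.
- apply/forallP => r; apply/implyP => Hr. have [p Hp ->] := imsetP Hr.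
  apply/forallP => i; apply/implyP; rewrite inE => /eqP ->.
  apply/forallP => j; apply/implyP; rewrite inE => /eqP ->.
  by move: Hp; rewrite inE; case: (Y p.1 p.2).
- apply/forallP => p; apply/implyP => Hp; apply/existsP.
  exists ([set p.1], [set p.2]).
  by rewrite imset_f //= !inE !eqxx.
Qed.

Definition brnum Y : nat := ex_minn (covers_with_ex Y).

Definition submat Y (I : {set R}) (J : {set C})
  : {i : R | i \in I} -> {j : C | j \in J} -> gentry :=
  fun i j => Y (val i) (val j).

End GenMat.
Arguments submat {R C} Y I J _ _.

Definition min_non_firm (R C : finType) (Y : R -> C -> gentry) : Prop :=
  inum Y < brnum Y /\
  forall (I : {set R}) (J : {set C}), (I != setT) || (J != setT) ->
    inum (submat Y I J) = brnum (submat Y I J).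

(* Main.v *)
Require Import Defs.
From mathcomp Require Import all_boot all_order all_algebra.

Set Implicit Arguments.
Unset Strict Implicit.
Unset Printing Implicit Defensive.

Section Gen.
Variables (R C : finType).
Implicit Type Y : R -> C -> gentry.

Lemma brnum_le Y k : covers_with Y k -> brnum Y <= k.
Proof. rewrite /brnum; case: ex_minnP => b _ H; exact: H. Qed.

Lemma brnum_cov Y : covers_with Y (brnum Y).
Proof. rewrite /brnum; by case: ex_minnP. Qed.

Lemma brnum_leP Y P : rect_cover Y P -> brnum Y <= #|P|.
Proof. move=> H; apply: brnum_le; apply/existsP; exists P; by rewrite eqxx. Qed.

Lemma inum_ge Y S : isolated Y S -> #|S| <= inum Y.
Proof. move=> H; rewrite /inum; exact: (@leq_bigmax_cond _ _ (fun S : {set R * C} => #|S|) _ H). Qed.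

End Gen.
Section Gen2.
Variables (R C : finType).
Implicit Type Y : R -> C -> gentry.

Lemma inum_sub Y (I : {set R}) (J : {set C}) :
  inum (submat Y I J) <= inum Y.
Proof.
rewrite /inum; apply/bigmax_leqP => S HS.
pose f := fun p : {i : R | i \in I} * {j : C | j \in J} => (val p.1, val p.2).
have finj : injective f.
  move=> [a b] [c d] []; rewrite /f /= => /val_inj -> /val_inj -> //.
rewrite -(card_imset _ finj); apply: inum_ge.
move: HS => /andP [Hsub /forallP Hiso].
apply/andP; split.
  apply/subsetP => x /imsetP [p Hp ->]; move/subsetP: Hsub => /(_ p Hp).
  by rewrite !inE.
apply/forallP => x; apply/implyP => /imsetP [p Hp ->].
apply/forallP => y; apply/implyP => /imsetP [q Hq ->].
apply/implyP => Hne.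
have Hne' : p != q by apply: contra Hne => /eqP ->.
move: (Hiso p); rewrite Hp /= => /forallP /(_ q); rewrite Hq Hne' /=.
apply: contra => /existsP [I0 /existsP [J0 /and5P [Hr H1 H2 H3 H4]]].
apply/existsP; exists [set i | val i \in I0]; apply/existsP;
  exists [set j | val j \in J0].
rewrite !inE H1 H2 H3 H4 /= !andbT.
apply/forallP => i; apply/implyP; rewrite inE => Hi.
apply/forallP => j; apply/implyP; rewrite inE => Hj.
by move/forallP: Hr => /(_ (val i)); rewrite Hi /= => /forallP /(_ (val j)); rewrite Hj.
Qed.

Lemma brnum_row Y (r : R) :
  brnum Y <= (brnum (submat Y (setT :\ r) setT)).+1.
Proof.
set I := setT :\ r.
have /existsP [P' /andP [/eqP HP' /andP [Hrect /forallP Hcov]]] :=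
  brnum_cov (submat Y I setT).
pose g := fun rr : {set {i : R | i \in I}} * {set {j : C | j \in [set: C]}} =>
  ([set val x | x in rr.1], [set val y | y in rr.2]).
pose P := g @: P' :|: [set ([set r], [set j | is_one (Y r j)])].
apply: (@leq_trans #|P|).
  apply: brnum_leP; apply/andP; split.
    apply/forallP => rr; apply/implyP; rewrite inE => /orP [].
      move=> /imsetP [s Hs ->] /=.
      apply/forallP => i; apply/implyP => /imsetP [a Ha ->].
      apply/forallP => j; apply/implyP => /imsetP [b Hb ->].
      move/forallP: Hrect => /(_ s); rewrite Hs /= => /forallP /(_ a).
      by rewrite Ha /= => /forallP /(_ b); rewrite Hb.
    rewrite inE => /eqP -> /=.
    apply/forallP => i; apply/implyP; rewrite inE => /eqP ->.
    apply/forallP => j; apply/implyP; rewrite inE.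
    by case: (Y r j).
  apply/forallP => p; apply/implyP => Hp.
  case: (eqVneq p.1 r) => Hpr.
    apply/existsP; exists ([set r], [set j | is_one (Y r j)]).
    rewrite !inE eqxx orbT /= Hpr eqxx /=.
    by move: Hp; rewrite inE Hpr.
  have HI : p.1 \in I by rewrite !inE Hpr.
  have HJ : p.2 \in [set: C] by rewrite inE.
  move: (Hcov (exist _ p.1 HI, exist _ p.2 HJ)).
  rewrite inE /submat /=.
  move: Hp; rewrite inE => -> /= /existsP [s /andP [Hs /andP [Ha Hb]]].
  apply/existsP; exists (g s); rewrite inE imset_f //=.
  apply/andP; split.
    by apply/imsetP; exists (exist _ p.1 HI).
  by apply/imsetP; exists (exist _ p.2 HJ).
rewrite -HP' (leq_trans (leq_card_setU _ _)) // cards1 addn1 ltnS.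
exact: leq_imset_card.
Qed.

Lemma main_gen Y : min_non_firm Y -> inum Y = (brnum Y).-1.
Proof.
move=> [Hlt Hsub].
case: (set_0Vmem (gsupp Y)) => [H0 | [p Hp]].
  have : brnum Y <= 0.
    have -> : 0 = #|(set0 : {set {set R} * {set C}})| by rewrite cards0.
    apply: brnum_leP; apply/andP; split; apply/forallP => x; apply/implyP.
      by rewrite inE.
    by rewrite H0 inE.
  by rewrite leqn0 => /eqP H; rewrite H in Hlt.
have Hb := brnum_row Y p.1.
have Hpr : (setT :\ p.1 != setT) || ([set: C] != setT).
  apply/orP; left; apply/eqP => E.
  by have := in_setT p.1; rewrite -E !inE eqxx.
rewrite -(Hsub _ _ Hpr) in Hb.
have Hi := inum_sub Y (setT :\ p.1) setT.
have : brnum Y = (inum Y).+1.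
  apply/eqP; rewrite eqn_leq Hlt andbT.
  by apply: (leq_trans Hb); rewrite ltnS.
by move=> ->.
Qed.

End Gen2.

Theorem lemma6 (m n : nat) (Y : 'M[gentry]_(m, n)) :
  min_non_firm (fun i j => Y i j) ->
  inum (fun i j => Y i j) = (brnum (fun i j => Y i j)).-1.
Proof. exact: main_gen. Qed.
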